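(* Assume $\phi_1>\alpha(C_s+C_m)$. There exists $\bar\pi>0$ such that for every $\pi>\bar\pi$, $$\tilde U_M(\mathbf r,\pi)<\tilde U_M(\mathbf r^{id},\pi)\quad\text{for all }\mathbf r\in\mathcal R_e\text{ with }\mathbf r\neq\mathbf r^{id}.$$
   Context: Supply-chain model. The parameters are a price-sensitivity $\alpha\in(0,1]$, a manufacturer's per-unit production cost $C_m\ge 0$, and a supplier's per-unit procurement cost $C_s\ge 0$. For $x\in\mathbb R$ write $x^+=\max\{0,x\}$. The market potential takes values in $\{\phi_1,\dots,\phi_L\}$ with $\phi_1<\phi_2<\dots<\phi_L$, with respective probabilities $\sigma_1,\dots,\sigma_L>0$ summing to $1$. Greedy misreporting policies. $\mathcal R_e$ is the set of $L\times L$ matrices $\mathbf r=(r_{ij})$ such that $r_{ij}\ge0$ for all $i,j$, $r_{ij}=0$ whenever $i<j$, and $\sum_j r_{ij}=1$ for every $i$. Here $r_{ij}$ is the probability of reporting $\phi_j$ when the true potential is $\phi_i$, so a greedy manufacturer only under-reports. $\mathbf r^{id}$ denotes the identity matrix, i.e. truthful reporting. Further notation. Define $$f(\mathbf r)=\sum_{i\ge j}\sigma_i(\phi_i-\phi_j)r_{ij}$$ and $$h_{ij}=\frac{2\phi_i-\phi_j-\alpha(C_m+C_s)}{4\sqrt\alpha}.$$ For a penalty parameter $\pi\ge0$, the manufacturer's limiting utility under misreporting policy $\mathbf r$ and punitive policy $\pi$ is $$\tilde U_M(\mathbf r,\pi)=\sum_{i\ge j}\sigma_i\,r_{ij}\Big(\big[h_{ij}-\pi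 f(\mathbf r)\big]^+\Big)^2 .$$ *)

(* Defs.v *)
(* R : realType, indices 'I_L.+1 (phi_1 is phi ord0). *)
From HB Require Import structures.
From mathcomp Require Import all_boot all_order all_algebra.
From mathcomp Require Import reals.
Set Implicit Arguments. Unset Strict Implicit. Unset Printing Implicit Defensive.
Import Order.TTheory GRing.Theory Num.Theory.
Local Open Scope ring_scope.

Section Defs.
Variables (R : realType) (L : nat).

Definition greedy_policy (r : 'M[R]_L.+1) : Prop :=
  [/\ forall i j, 0 <= r i j,
      forall i j : 'I_L.+1, (i < j)%N -> r i j = 0
    & forall i, \sum_j r i j = 1].

Definition f_mis (sigma phi : 'I_L.+1 -> R) (r : 'M[R]_L.+1) : R :=
  \sum_(i < L.+1) \sum_(j < L.+1 | (j <= i)%N) sigma i * (phi i - phi j) * r i j.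

Definition h_coef (alpha Cm Cs : R) (phi : 'I_L.+1 -> R) (i j : 'I_L.+1) : R :=
  (2 * phi i - phi j - alpha * (Cm + Cs)) / (4 * Num.sqrt alpha).

Definition posp (x : R) : R := Num.max 0 x.

Definition U_M (alpha Cm Cs : R) (sigma phi : 'I_L.+1 -> R)
    (r : 'M[R]_L.+1) (pi : R) : R :=
  \sum_(i < L.+1) \sum_(j < L.+1 | (j <= i)%N)
     sigma i * r i j * (posp (h_coef alpha Cm Cs phi i j - pi * f_mis sigma phi r)) ^+ 2.
End Defs.

(* Main.v *)
Require Import Defs.
From HB Require Import structures.
From mathcomp Require Import all_boot all_order all_algebra.
From mathcomp Require Import reals.
From mathcomp Require Import ring lra.
Import Order.TTheory GRing.Theory Num.Theory.
Local Open Scope ring_scope.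

Section H.
Variable R : realType.

Lemma posp_id (x : R) : 0 <= x -> posp x = x.
Proof. by move=> h; rewrite /posp; apply/max_idPr. Qed.
Lemma posp_0 (x : R) : x <= 0 -> posp x = 0.
Proof. by move=> h; rewrite /posp; apply/max_idPl. Qed.
Lemma posp_ge0 (x : R) : 0 <= posp x.
Proof. by rewrite /posp le_max lexx. Qed.
Lemma posp_le (x y : R) : x <= y -> 0 <= y -> posp x <= y.
Proof. by move=> h1 h2; rewrite /posp ge_max h1 h2. Qed.

Lemma lb_exists (T : finType) (P : pred T) (a : T -> R) :
  (forall x, P x -> 0 < a x) -> exists d, 0 < d /\ forall x, P x -> d <= a x.
Proof.
move=> ha.
have S0 : 0 <= \sum_(x | P x) (a x)^-1.
  by apply: sumr_ge0 => x Px; rewrite invr_ge0 ltW // ha.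
exists (1 + \sum_(x | P x) (a x)^-1)^-1; split.
  by rewrite invr_gt0; lra.
move=> x Px.
have ax := ha x Px.
rewrite -[a x]invrK lef_pV2 ?posrE ?invr_gt0 //; last lra.
rewrite (bigD1 x) //=.
have : 0 <= \sum_(i | P i && (i != x)) (a i)^-1.
  by apply: sumr_ge0 => i /andP[Pi _]; rewrite invr_ge0 ltW // ha.
lra.
Qed.

Lemma ub_exists (T : finType) (a : T -> R) :
  exists H, 0 <= H /\ forall x, a x <= H.
Proof.
exists (\sum_x `|a x|); split; first by apply: sumr_ge0 => x _.
move=> x; rewrite (bigD1 x) //=.
have : 0 <= \sum_(i | i != x) `|a i| by apply: sumr_ge0.
have := ler_norm (a x).
lra.
Qed.
Lemma term_le_sum (T : finType) (P : pred T) (F : T -> R) x :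
  (forall y, P y -> 0 <= F y) -> P x -> F x <= \sum_(y | P y) F y.
Proof.
move=> h Px; rewrite (bigD1 x) //=.
have : 0 <= \sum_(i | P i && (i != x)) F i by apply: sumr_ge0 => i /andP[Pi _]; apply: h.
lra.
Qed.
End H.

Theorem theorem1 (R : realType) (L : nat) (alpha Cm Cs : R)
    (phi sigma : 'I_L.+1 -> R) :
  0 < alpha -> alpha <= 1 -> 0 <= Cm -> 0 <= Cs ->
  (forall i j : 'I_L.+1, (i < j)%N -> phi i < phi j) ->
  (forall i, 0 < sigma i) -> \sum_i sigma i = 1 ->
  alpha * (Cs + Cm) < phi ord0 ->
  exists pibar : R, 0 < pibar /\
    forall pi : R, pibar < pi ->
    forall r : 'M[R]_L.+1, greedy_policy r -> r <> 1%:M ->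
      U_M alpha Cm Cs sigma phi r pi < U_M alpha Cm Cs sigma phi 1%:M pi.
Proof.
move=> ha0 ha1 hCm hCs hphi hsig hsum hphi0.
set h := h_coef alpha Cm Cs phi.
have phile : forall i j : 'I_L.+1, (j <= i)%N -> phi j <= phi i.
  move=> i j; rewrite leq_eqVlt => /orP[/eqP/val_inj -> //| /hphi/ltW //].
have hpos : forall i j : 'I_L.+1, (j <= i)%N -> 0 < h i j.
  move=> i j ji; rewrite /h /h_coef divr_gt0 //; last first.
    by rewrite mulr_gt0 // sqrtr_gt0.
  have := phile i j ji; have := phile i ord0 (leq0n _); lra.
have [m [m0 hm]] := @lb_exists R _ predT (fun i : 'I_L.+1 => h i i)
   (fun i _ => hpos i i (leqnn _)).
have [H [H0 hH]] := @ub_exists R _ (fun p : 'I_L.+1 * 'I_L.+1 => h p.1 p.2).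
have [d [d0 hd]] := @lb_exists R _ (fun p : 'I_L.+1 * 'I_L.+1 => (p.2 < p.1)%N)
   (fun p => phi p.1 - phi p.2) (fun p hp => ltac:(by rewrite subr_gt0; apply: hphi)).
have U1 : forall pi, U_M alpha Cm Cs sigma phi 1%:M pi = \sum_i sigma i * h i i ^+ 2.
  move=> pi.
  have f1 : f_mis sigma phi 1%:M = 0.
    rewrite /f_mis big1 // => i _; rewrite big1 // => j _; rewrite mxE.
    by case: eqVneq => [->|]; rewrite ?subrr ?mulr0 ?mul0r ?mulr1n ?mulr0n.
  rewrite /U_M f1 mulr0; apply: eq_bigr => i _.
  rewrite (bigD1 i) //= big1 ?addr0.
    by rewrite mxE eqxx mulr1n mulr1 subr0 posp_id // ltW // hpos.
  by move=> j /andP[_ ji]; rewrite mxE eq_sym (negbTE ji) mulr0n mulr0 mul0r.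
set K1 := (H ^+ 2 + m ^+ 2) / (m * d).
set K2 := H * (H ^+ 2 + m ^+ 2) / (m ^+ 2 * d).
have K10 : 0 <= K1 by rewrite divr_ge0 // ?mulr_ge0 ?addr_ge0 ?sqr_ge0 // ltW.
have K20 : 0 <= K2 by rewrite divr_ge0 // ?mulr_ge0 ?addr_ge0 ?sqr_ge0 // ltW.
exists (1 + K1 + K2); split; first lra.
move=> pi hpi r [rge0 rz rsum] rne.
have pi0 : 0 < pi by lra.
have rowsum : forall i : 'I_L.+1, \sum_(j < L.+1 | (j <= i)%N) r i j = 1.
  move=> i; rewrite big_mkcond -(rsum i); apply: eq_bigr => j _.
  by case: leqP => // /rz ->.
set f := f_mis sigma phi r.
pose S (g : 'I_L.+1 -> 'I_L.+1 -> R) :=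
  \sum_(i < L.+1) \sum_(j < L.+1 | (j <= i)%N) sigma i * r i j * g i j.
have S_le : forall g1 g2 : 'I_L.+1 -> 'I_L.+1 -> R, (forall i j : 'I_L.+1, (j <= i)%N -> g1 i j <= g2 i j) -> S g1 <= S g2.
  move=> g1 g2 hg; apply: ler_sum => i _; apply: ler_sum => j ji.
  by apply: ler_wpM2l; [rewrite mulr_ge0 // ltW|apply: hg].
have S_B : forall g1 g2 : 'I_L.+1 -> 'I_L.+1 -> R, S g1 - S g2 = S (fun i j => g1 i j - g2 i j).
  move=> g1 g2; rewrite /S -sumrB; apply: eq_bigr => i _.
  by rewrite -sumrB; apply: eq_bigr => j _; rewrite mulrBr.
have S_c : forall c : 'I_L.+1 -> R, S (fun i _ => c i) = \sum_i sigma i * c i.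
  move=> c; apply: eq_bigr => i _.
  under eq_bigr do rewrite mulrAC.
  by rewrite -mulr_sumr rowsum mulr1.
have S_aff : forall A B, S (fun i j => A * (phi i - phi j) - B) = A * f - B.
  move=> A B; rewrite -S_B.
  have -> : S (fun _ _ => B) = B by rewrite (S_c (fun _ => B)) -mulr_suml hsum mul1r.
  congr (_ - _); rewrite /S /f /f_mis mulr_sumr; apply: eq_bigr => i _.
  by rewrite mulr_sumr; apply: eq_bigr => j _; ring.
have UE : U_M alpha Cm Cs sigma phi r pi - U_M alpha Cm Cs sigma phi 1%:M pi =
   S (fun i j => posp (h i j - pi * f) ^+ 2 - h i i ^+ 2).
  by rewrite U1 -(S_c (fun i => h i i ^+ 2)) S_B.
have fpos : 0 < f.
  have gapge0 : forall i j : 'I_L.+1, (j <= i)%N -> 0 <= phi i - phi j.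
    by move=> i j ji; rewrite subr_ge0 phile.
  case: (boolP [exists i : 'I_L.+1, exists j : 'I_L.+1, ((j < i)%N && (0 < r i j))]).
    case/existsP => i /existsP [j /andP [ji rij]].
    apply: (@lt_le_trans _ _ (sigma i * (phi i - phi j) * r i j)).
      by rewrite !mulr_gt0 // subr_gt0 hphi.
    have inner := @term_le_sum R _ (fun j : 'I_L.+1 => (j <= i)%N)
       (fun j => sigma i * (phi i - phi j) * r i j) j
       (fun l lk => ltac:(by rewrite !mulr_ge0 ?gapge0 // ltW)) (ltnW ji).
    apply: (le_trans inner).
    rewrite /f /f_mis.
    rewrite [X in _ <= X](bigD1 i) //= lerDl.
    by apply: sumr_ge0 => k _; apply: sumr_ge0 => l lk; rewrite !mulr_ge0 ?gapge0 // ltW.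
  move=> hno; exfalso; apply: rne; apply/matrixP => i j; rewrite mxE.
  have rz2 : forall i j : 'I_L.+1, (j < i)%N -> r i j = 0.
    move=> a b ba; apply/eqP; rewrite eq_le rge0 andbT leNgt; apply/negP => pos.
    by move/negP: hno; apply; apply/existsP; exists a; apply/existsP; exists b; rewrite ba pos.
  case: (ltngtP i j) => [ij|ji|/val_inj ->].
  - by rewrite rz // -val_eqE /= (ltn_eqF ij) mulr0n.
  - by rewrite rz2 // -val_eqE /= (gtn_eqF ji) mulr0n.
  - rewrite eqxx mulr1n -(rsum j) (bigD1 j) //= big1 ?addr0 // => k kj.
    case: (ltngtP j k) => [jk|kj'|/val_inj e]; first by rewrite rz.
      by rewrite rz2.
    by rewrite e eqxx in kj.
have pf0 : 0 <= pi * f by rewrite mulr_ge0 // ltW.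
have term : forall c, 0 <= c -> c <= pi * f * m -> c <= m * m ->
   forall i j : 'I_L.+1, (j <= i)%N ->
   posp (h i j - pi * f) ^+ 2 - h i i ^+ 2 <= (H ^+ 2 + c) / d * (phi i - phi j) - c.
  move=> c c0 c1 c2 i j ji.
  have mh := hm i isT.
  have hii := hpos i i (leqnn _).
  case: (ltngtP j i) => [ji'|ij|/val_inj e].
  - have hd' := hd (i, j) ji'; have hij := hH (i, j); rewrite /= in hd' hij.
    have pp : posp (h i j - pi * f) <= H by apply: posp_le => //; lra.
    have pp0 := @posp_ge0 R (h i j - pi * f).
    have sq : posp (h i j - pi * f) ^+ 2 <= H ^+ 2 by rewrite !expr2; nra.
    have eq : (H ^+ 2 + c) / d * (phi i - phi j) - c - H ^+ 2 =
              (H ^+ 2 + c) * (phi i - phi j - d) / d.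
      by field; rewrite gt_eqF.
    have : 0 <= (H ^+ 2 + c) * (phi i - phi j - d) / d.
      apply: divr_ge0; last exact: ltW.
      apply: mulr_ge0; first by rewrite addr_ge0 // sqr_ge0.
      lra.
    have : 0 <= h i i ^+ 2 by rewrite sqr_ge0.
    lra.
  - by rewrite ltnNge ji in ij.
  - rewrite e subrr mulr0 sub0r.
    case: (leP 0 (h i i - pi * f)) => hc.
      rewrite posp_id // !expr2; nra.
    rewrite posp_0; last exact: ltW.
    rewrite expr0n /= sub0r lerN2 expr2; nra.
rewrite -subr_lt0 UE.
case: (leP H (pi * f)) => Hpf.
  apply: (@le_lt_trans _ _ (S (fun i j => 0 * (phi i - phi j) - m ^+ 2))).
    apply: S_le => i j ji.
    have hij := hH (i, j); rewrite /= in hij.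
    rewrite posp_0; last lra.
    have mh := hm i isT.
    rewrite mul0r sub0r expr0n /= sub0r lerN2 !expr2; nra.
  rewrite S_aff mul0r sub0r oppr_lt0 expr2; nra.
case: (leP (pi * f) m) => pfm.
  apply: (@le_lt_trans _ _ (S (fun i j => (H ^+ 2 + pi * f * m) / d * (phi i - phi j) - pi * f * m))).
    apply: S_le; apply: term; [by rewrite !mulr_ge0 // ltW | by [] | nra].
  rewrite S_aff mulrAC subr_lt0 ltr_pdivrMr //.
  have : H ^+ 2 + m ^+ 2 < pi * (m * d).
    rewrite -ltr_pdivrMr ?mulr_gt0 //; rewrite /K1 in hpi; lra.
  move=> hk.
  have e1 : pi * f * m <= m ^+ 2 by rewrite expr2 ler_wpM2r // ltW.
  have e2 : H ^+ 2 + pi * f * m < pi * (m * d) by lra.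
  have -> : pi * f * m * d = pi * (m * d) * f by ring.
  by rewrite ltr_pM2r.
apply: (@le_lt_trans _ _ (S (fun i j => (H ^+ 2 + m * m) / d * (phi i - phi j) - m * m))).
  apply: S_le; apply: term; [by rewrite mulr_ge0 // ltW | nra | by []].
rewrite S_aff mulrAC subr_lt0 ltr_pdivrMr //.
have : H * (H ^+ 2 + m ^+ 2) < pi * (m ^+ 2 * d).
  rewrite -ltr_pdivrMr ?mulr_gt0 ?exprn_gt0 //; rewrite /K2 in hpi; lra.
have H2 : 0 <= H ^+ 2 + m ^+ 2 by rewrite addr_ge0 // sqr_ge0.
move=> hk.
have : pi * ((H ^+ 2 + m * m) * f) < pi * (m * m * d).
  rewrite -!expr2; nra.
by rewrite ltr_pM2l.
Qed.
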